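(* Let $\varphi$ be an almost identity PC-map of $\mathrm{UT}(n,F)$ and let $k$ be an integer with $2\le k\le n-3$. If conditions $Z_{k-1}$ and $Y_k$ hold for $\varphi$, then condition $Z_k$ holds for $\varphi$.
   Context: $F$ is a field and $n\in\mathbb N\cup\{\infty\}$. $\mathrm{UT}(n,F)$ is the group of upper unitriangular $n\times n$ matrices over $F$ (for $n=\infty$: all $\mathbb N\times\mathbb N$ matrices with $1$ on the diagonal and $0$ below it). Convention: $\infty+m=\infty$ for $m\in\mathbb Z$. $e$ is the identity matrix, $e_{ij}$ the matrix unit, $t_{ij}(\alpha)=e+\alpha e_{ij}$ ($i<j$). $[x,y]=xyx^{-1}y^{-1}$. A PC-map is a bijection $\varphi$ of the group with $\varphi([x,y])=[\varphi(x),\varphi(y)]$ for all $x,y$; it is almost identity if $\varphi(t_{ij}(\alpha))=t_{ij}(\alpha)$ for all $i<j$, $\alpha\in F$. $C$ denotes the center of $\mathrm{UT}(n,F)$ (trivial if $n=\infty$, equal to $\{t_{1n}(\alpha):\alpha\in F\}$ if $n$ is finite). Conditions: $Y_k$ ($k\le n-3$): for all $\beta,\alpha_1,\dots,\alpha_{k-1}\in F$, the matrix $y=t_{k+1\,k+2}(\beta)\prod_{i=1}^{k-1}t_{ik}(\alpha_i)$ satisfies $\varphi(y)\in yC$. $Z_k$ ($k\le n-3$): for all $\gamma_1,\dots,\gamma_k\in F$, the matrix $z=\prod_{i=1}^{k}t_{i\,k+3}(\gamma_i)$ satisfies $\varphi(z)=z$. (Thus $Z_{k-1}$ says $\varphi$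 fixes every $\prod_{i=1}^{k-1}t_{i\,k+2}(\gamma_i)$.) *)

(* Defs.v *)
From HB Require Import structures.
From mathcomp Require Import all_boot all_order all_algebra.
Set Implicit Arguments. Unset Strict Implicit. Unset Printing Implicit Defensive.
Import Order.TTheory GRing.Theory Num.Theory.
Local Open Scope ring_scope.

(* Extended dimension n \in N \cup {oo}: [Some m] = m, [None] = infinity. *)
Definition ext_nat := option nat.

(* Matrices indexed by nat x nat; the paper's indices are 1-based, index 0
   (and indices > n when n is finite) are "outside" and carry identity
   entries. *)
Definition mat (F : fieldType) := nat -> nat -> F.

Section UT.
Variable F : fieldType.

Definition inrange (n : ext_nat) (i : nat) : bool :=
  (1 <= i)%N && (if n is Some m then (i <= m)%N else true).

Definition ext_le (i : nat) (n : ext_nat) : bool :=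
  if n is Some m then (i <= m)%N else true.

Definition e : mat F := fun i j => (i == j)%:R.

Definition unit_mx (i j : nat) : mat F := fun a b => ((a == i) && (b == j))%:R.

(* product of (upper triangular) matrices: (AB)_ij = sum_{i<=k<=j} A_ik B_kj
   (a finite sum, so it makes sense also for N x N upper triangular matrices) *)
Definition mmul (A B : mat F) : mat F :=
  fun i j => \sum_(i <= k < j.+1) A i k * B k j.

Definition mpow (A : mat F) (m : nat) : mat F := iter m (mmul A) e.

(* inverse of a unitriangular matrix A = e + N : sum_m (-N)^m (finite in each
   entry since N is strictly upper triangular) *)
Definition minv (A : mat F) : mat F :=
  fun i j => \sum_(m < (j - i).+1) mpow (fun a b => e a b - A a b) m i j.

Definition isUT (n : ext_nat) (A : mat F) : Prop :=
  (forall i, A i i = 1) /\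
  (forall i j, i != j -> ~~ [&& (i < j)%N, inrange n i & inrange n j] ->
     A i j = 0).

Definition t (i j : nat) (alpha : F) : mat F :=
  fun a b => e a b + alpha * unit_mx i j a b.

Definition comm (x y : mat F) : mat F :=
  mmul (mmul x y) (mmul (minv x) (minv y)).

Definition PCmap (n : ext_nat) (phi : mat F -> mat F) : Prop :=
  (forall x, isUT n x -> isUT n (phi x)) /\
  (forall x y, isUT n x -> isUT n y -> phi x = phi y -> x = y) /\
  (forall y, isUT n y -> exists x, isUT n x /\ phi x = y) /\
  (forall x y, isUT n x -> isUT n y -> phi (comm x y) = comm (phi x) (phi y)).

Definition almost_identity (n : ext_nat) (phi : mat F -> mat F) : Prop :=
  forall i j (alpha : F), (1 <= i)%N -> (i < j)%N -> inrange n j ->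
    phi (t i j alpha) = t i j alpha.

Definition inCenter (n : ext_nat) (c : mat F) : Prop :=
  if n is Some m then exists alpha : F, c = t 1 m alpha else c = e.

Definition condY (n : ext_nat) (phi : mat F -> mat F) (k : nat) : Prop :=
  forall (beta : F) (alpha : nat -> F),
    let y := mmul (t k.+1 k.+2 beta) (\big[mmul/e]_(1 <= i < k) t i k (alpha i)) in
    exists c, inCenter n c /\ phi y = mmul y c.

Definition condZ (phi : mat F -> mat F) (k : nat) : Prop :=
  forall gamma : nat -> F,
    let z := \big[mmul/e]_(1 <= i < k.+1) t i (k + 3) (gamma i) in
    phi z = z.

End UT.

(* Main.v *)
Require Import Defs.
From HB Require Import structures.
From mathcomp Require Import all_boot all_order all_algebra.
From mathcomp Require Import zify ring.
From Stdlib Require Import FunctionalExtensionality.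
Import GRing.Theory.
Local Open Scope ring_scope.

Section H.
Variable F : fieldType.
Local Notation M := (mat F).
Local Notation E := (e F).

Definition madd (A B : M) : M := fun p q => A p q + B p q.
Definition mneg (A : M) : M := fun p q => - A p q.
Definition mzero : M := fun _ _ => 0.
Definition gcol (j : nat) (f : nat -> F) : M :=
  fun p q => (q == j)%:R * (if (0 < p < j)%N then f p else 0).
Definition supper (X : M) := forall p q, (q <= p)%N -> X p q = 0.

Lemma meq (A B : M) : (forall p q, A p q = B p q) -> A = B.
Proof. by move=> h; apply: functional_extensionality => p; apply: functional_extensionality. Qed.

Lemma sum_delta (s : seq nat) j (c : nat -> F) : uniq s ->
  \sum_(r <- s) (r == j)%:R * c r = (j \in s)%:R * c j.
Proof.
elim: s => [|x s IH] /=; first by rewrite big_nil mul0r.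
case/andP => xs us; rewrite big_cons IH // in_cons.
case: (eqVneq x j) => [ej|ne].
  by subst x; rewrite (negbTE xs) /= mul0r addr0.
by rewrite [false%:R]/= mul0r add0r.
Qed.

Lemma sum_delta_nat a b j (c : nat -> F) :
  \sum_(a <= r < b) (r == j)%:R * c r = ((a <= j < b)%N)%:R * c j.
Proof. by rewrite sum_delta ?iota_uniq // mem_index_iota. Qed.

Lemma mmulDl A B C : mmul (madd A B) C = madd (mmul A C) (mmul B C).
Proof. apply: meq => p q; rewrite /mmul /madd -big_split /=; apply: eq_bigr => r _; exact: mulrDl. Qed.
Lemma mmulDr A B C : mmul A (madd B C) = madd (mmul A B) (mmul A C).
Proof. apply: meq => p q; rewrite /mmul /madd -big_split /=; apply: eq_bigr => r _; exact: mulrDr. Qed.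
Lemma mmulNl A B : mmul (mneg A) B = mneg (mmul A B).
Proof. apply: meq => p q; rewrite /mmul /mneg -sumrN; apply: eq_bigr => r _; exact: mulNr. Qed.
Lemma mmulNr A B : mmul A (mneg B) = mneg (mmul A B).
Proof. apply: meq => p q; rewrite /mmul /mneg -sumrN; apply: eq_bigr => r _; exact: mulrN. Qed.
Lemma mmul0r A : mmul mzero A = mzero.
Proof. apply: meq => p q; rewrite /mmul /mzero big1 // => r _; exact: mul0r. Qed.
Lemma mmulr0 A : mmul A mzero = mzero.
Proof. apply: meq => p q; rewrite /mmul /mzero big1 // => r _; exact: mulr0. Qed.

Lemma mmul1l Y : supper Y -> mmul E Y = Y.
Proof.
move=> sY; apply: meq => p q; rewrite /mmul /e.
rewrite (eq_bigr (fun r => (r == p)%:R * Y r q)); last by move=> r _; rewrite eq_sym.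
rewrite sum_delta_nat leqnn /=; case: ltnP => h; first by rewrite mul1r.
by rewrite mul0r sY //; lia.
Qed.
Lemma mmul1r X : supper X -> mmul X E = X.
Proof.
move=> sX; apply: meq => p q; rewrite /mmul /e.
rewrite (eq_bigr (fun r => (r == q)%:R * X p r)); last by move=> r _; rewrite mulrC.
rewrite sum_delta_nat ltnSn andbT; case: leqP => h; first by rewrite mul1r.
by rewrite mul0r sX //; lia.
Qed.

Lemma mmul_gcol j l f g : mmul (gcol j f) (gcol l g) =
  gcol l (fun p => (if (0 < p < j)%N then f p else 0) * (if (0 < j < l)%N then g j else 0)).
Proof.
apply: meq => p q; rewrite /mmul /gcol.
rewrite (eq_bigr (fun r => (r == j)%:R * ((if (0 < p < j)%N then f p else 0) *
   ((q == l)%:R * (if (0 < r < l)%N then g r else 0))))); last first.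
  by move=> r _; rewrite !mulrA.
rewrite sum_delta_nat.
case: (eqVneq q l) => [ql|ql]; last by rewrite !mul0r !mulr0.
subst q.
case: (ltnP 0 p) => p0 /=; last by rewrite !(mul0r, mulr0).
case: (ltnP p j) => pj /=; last by rewrite ?(mul0r, mulr0); case: ifP => //; rewrite mulr0.
case: (ltnP 0 j) => j0 /=; last by rewrite !(mul0r, mulr0); case: ifP => //; rewrite mulr0.
case: (ltnP j l) => jl /=; last by rewrite !(mul0r, mulr0); case: ifP => //; rewrite mulr0.
have -> : (p <= j < l.+1)%N by lia.
have -> : (p < l)%N by lia.
by rewrite /= !mul1r.
Qed.

Lemma supper_gcol j f : supper (gcol j f).
Proof. move=> p q h; rewrite /gcol; case: (eqVneq q j) => [qj|]; last by rewrite mul0r.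
by case: ifP => [/andP[_ ?]|]; [lia| rewrite mulr0]. Qed.
Lemma supper_madd A B : supper A -> supper B -> supper (madd A B).
Proof. by move=> hA hB p q h; rewrite /madd hA // hB // addr0. Qed.
Lemma supper_mneg A : supper A -> supper (mneg A).
Proof. by move=> hA p q h; rewrite /mneg hA // oppr0. Qed.

Lemma mneg_gcol j f : mneg (gcol j f) = gcol j (fun p => - f p).
Proof. apply: meq => p q; rewrite /mneg /gcol; case: ifP => _; [by rewrite mulrN | by rewrite mulr0 oppr0]. Qed.
Lemma mneg_madd A B : mneg (madd A B) = madd (mneg A) (mneg B).
Proof. apply: meq => p q; rewrite /mneg /madd opprD //. Qed.

Lemma mmulEE : mmul E E = E.
Proof.
  apply: meq => p q; rewrite /mmul /e.
  rewrite (eq_bigr (fun r => (r == q)%:R * (p == r)%:R%R)); last by move=> r _; rewrite mulrC.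
  rewrite sum_delta_nat ltnSn andbT; case: leqP => h; first by rewrite mul1r.
  by rewrite mul0r (_ : (p == q) = false) //; lia.
Qed.

Lemma mmul_ee X Y : supper X -> supper Y ->
  mmul (madd E X) (madd E Y) = madd E (madd X (madd Y (mmul X Y))).
Proof.
move=> sX sY; rewrite mmulDl !mmulDr mmulEE mmul1l // mmul1r //.
apply: meq => i j; rewrite /madd; ring.
Qed.

Lemma mpow_sq X m : mmul X X = mzero -> supper X -> mpow X m.+2 = mzero.
Proof.
move=> hX sX; elim: m => [|m IH] /=.
  by rewrite mmul1r.
by move: IH => /= ->; rewrite mmulr0.
Qed.

Lemma minv_e X : supper X -> mmul X X = mzero -> minv (madd E X) = madd E (mneg X).
Proof.
move=> sX hX; apply: meq => p q; rewrite /minv.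
have -> : (fun a b => e F a b - madd E X a b) = mneg X.
  by apply: meq => a b; rewrite /madd /mneg opprD addrA subrr add0r.
have hN : mmul (mneg X) (mneg X) = mzero.
  by rewrite mmulNl mmulNr hX; apply: meq => a b; rewrite /mneg /mzero opprK.
case: (leqP q p) => h.
  rewrite (_ : q - p = 0)%N; last by lia.
  by rewrite big_ord_recl big_ord0 /= /madd /mneg sX // oppr0 !addr0.
rewrite (_ : (q - p).+1 = (q - p - 1).+2)%N; last by lia.
rewrite big_ord_recl big_ord_recl big1 /=; last first.
  by move=> i _; have := mpow_sq (mneg X) (0 + i) hN (supper_mneg _ sX); rewrite /= => ->.
by rewrite mmul1r ?addr0 //; apply: supper_mneg.
Qed.


Ltac crush := repeat (match goal with
 | |- context [ (?a == ?b)%N ] => case: (eqVneq a b) => ?; try subst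
 | |- context [ (?a <= ?b)%N ] => case: (leqP a b) => ?
 end; try (exfalso; lia)).

Ltac noPQ t p q := lazymatch t with | context [p] => fail | context [q] => fail | _ => idtac end.
Ltac noP t p := lazymatch t with | context [p] => fail | _ => idtac end.
Ltac crushc p q := repeat (match goal with
 | |- context [ (?a == ?b)%N ] => noPQ a p q; noPQ b p q; case: (eqVneq a b) => ?; try (exfalso; lia)
 | |- context [ (?a <= ?b)%N ] => noPQ a p q; noPQ b p q; case: (leqP a b) => ?; try (exfalso; lia)
 end).
Ltac crushq p := repeat (match goal with
 | |- context [ (?a == ?b)%N ] => noP a p; noP b p; case: (eqVneq a b) => ?; try subst; try (exfalso; lia)
 | |- context [ (?a <= ?b)%N ] => noP a p; noP b p; case: (leqP a b) => ?; try (exfalso; lia)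
 end).
Ltac crush2 p q := crushc p q; rewrite ?mul0r ?mulr0 ?add0r ?addr0; crushq p; rewrite ?mul0r ?mulr0 ?add0r ?addr0; crush.

Lemma t_gcol i j a : (0 < i < j)%N ->
  t i j a = madd E (gcol j (fun p => if (p == i)%N then a else 0)).
Proof.
move=> hij; apply: meq => p q; rewrite /t /madd /gcol /unit_mx.
crush; rewrite /=; ring.
Qed.

Lemma bigprod s a j (g : nat -> F) : (1 <= s)%N -> (a <= j)%N ->
  \big[@mmul F/E]_(s <= i < a) t i j (g i) =
  madd E (gcol j (fun p => if (s <= p < a)%N then g p else 0)).
Proof.
move=> hs ha; move: {2}(a - s)%N (erefl (a-s)%N) => d.
elim: d s hs => [|d IH] s hs hd.
  rewrite big_geq; last by lia.
  apply: meq => p q; rewrite /madd /gcol; crush; rewrite /=; ring.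
rewrite big_ltn; last by lia.
rewrite IH; [|lia|lia].
rewrite t_gcol; last by lia.
rewrite mmul_ee; [|exact: supper_gcol|exact: supper_gcol]; rewrite mmul_gcol.
apply: meq => p q; rewrite /madd /gcol; crush; rewrite /=; ring.
Qed.

Definition sUT n (X : M) := forall p q, ~~ [&& (p < q)%N, inrange n p & inrange n q] -> X p q = 0.

Lemma isUT_eX n X : sUT n X -> isUT n (madd E X).
Proof.
move=> hX; split.
  by move=> i; rewrite /madd /e eqxx hX ?ltnn // addr0.
move=> i j nij h; rewrite /madd /e hX // (negbTE nij) addr0 //.
Qed.

Lemma sUT_gcol n j f : inrange n j -> sUT n (gcol j f).
Proof.
move=> hj p q; rewrite /gcol; case: (eqVneq q j) => [->|]; last by rewrite mul0r.
case: ifP => [/andP[h1 h2]|]; last by rewrite mulr0.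
move: hj; rewrite /inrange; case: n => [m|] /= hj; [| rewrite h2 h1 hj].
  by rewrite h2 h1 hj /= (_ : (p <= m)%N) //; lia.
by [].
Qed.

Lemma sUT_madd n A B : sUT n A -> sUT n B -> sUT n (madd A B).
Proof. by move=> hA hB p q h; rewrite /madd hA // hB // addr0. Qed.


Lemma supper_mmul A B : supper A -> supper (mmul A B).
Proof.
move=> hA p q h; rewrite /mmul big1_seq // => r; rewrite mem_index_iota => /andP[h1 h2].
by rewrite hA ?mul0r //; lia.
Qed.

Lemma comm_ee X Y : supper X -> supper Y -> mmul X X = mzero -> mmul Y Y = mzero ->
  comm (madd E X) (madd E Y) =
  madd E (madd (madd X (madd Y (mmul X Y))) (madd (madd (mneg X) (madd (mneg Y) (mmul (mneg X) (mneg Y))))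
     (mmul (madd X (madd Y (mmul X Y))) (madd (mneg X) (madd (mneg Y) (mmul (mneg X) (mneg Y))))))).
Proof.
move=> sX sY hX hY; rewrite /comm !minv_e // !mmul_ee //; try by apply: supper_mneg.
by repeat (apply: supper_madd); try apply: supper_mmul; try apply: supper_mneg.
by repeat (apply: supper_madd); try apply: supper_mmul; try apply: supper_mneg.
Qed.

Lemma gcol_sq j f : mmul (gcol j f) (gcol j f) = mzero.
Proof. rewrite mmul_gcol; apply: meq => p q; rewrite /gcol /mzero; crush; rewrite /=; ring. Qed.

Lemma caseA K (g : nat -> F) : (1 <= K)%N -> g K.+1 = 0 ->
 comm (madd E (gcol (K+3) (fun p => if (1 <= p < K.+1)%N then g p else 0)))
      (t (K+3) (K.+1+3) 1) =
 madd E (gcol (K.+1+3) (fun p => if (1 <= p < K.+2)%N then g p else 0)).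
Proof.
move=> hK hg; rewrite t_gcol; last by lia.
rewrite comm_ee; try apply: supper_gcol; try apply: gcol_sq.
rewrite !mneg_gcol !mmul_gcol !(mmulDl, mmulDr, mmul_gcol).
apply: meq => p q; rewrite /madd /gcol /e.
case: (eqVneq p K.+1) => [->|hp]; crush; rewrite /= ?hg; ring.
Qed.


Definition Yf K (b : F) (a : nat -> F) : M :=
  madd (gcol K.+3 (fun p => if (p == K.+2)%N then b else 0))
       (gcol K.+1 (fun p => if (1 <= p < K.+1)%N then a p else 0)).
Definition Ymf K b a m (a' : F) : M :=
  madd (Yf K b a) (gcol m (fun p => if (p == 1)%N then a' else 0)).
Definition Vf K (b : F) (a : nat -> F) : M :=
  madd (gcol K.+2 (fun p => if (1 <= p < K.+1)%N then a p else 0))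
       (gcol K.+3 (fun p => if (p == K.+1)%N then - b else if (1 <= p < K.+1)%N then - b * a p else 0)).
Definition Zf K (b : F) (a : nat -> F) : M :=
  gcol (K.+1 + 3) (fun p => if (p == K.+1)%N then - b else if (1 <= p < K.+1)%N then - b * a p else 0).

Lemma Y_eq K b a : (1 <= K)%N ->
  mmul (t K.+2 K.+3 b) (\big[@mmul F/E]_(1 <= i < K.+1) t i K.+1 (a i)) = madd E (Yf K b a).
Proof.
move=> hK; rewrite bigprod // t_gcol; last by lia.
rewrite mmul_ee; try apply: supper_gcol.
rewrite mmul_gcol; apply: meq => p q; rewrite /Yf /madd /gcol /e; crush; rewrite /=; ring.
Qed.

Lemma Yc_eq K b a m a' : (1 <= K)%N -> (K.+1 + 3 <= m)%N ->
  mmul (madd E (Yf K b a)) (t 1 m a') = madd E (Ymf K b a m a').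
Proof.
move=> hK hm; rewrite t_gcol; last by lia.
rewrite mmul_ee; [|apply: supper_madd; apply: supper_gcol|apply: supper_gcol].
rewrite /Ymf /Yf !(mmulDl, mmul_gcol); apply: meq => p q; rewrite /madd /gcol /e; crush; rewrite /=; ring.
Qed.

Lemma V_eq K b a m a' : (1 <= K)%N -> (K.+1 + 3 <= m)%N ->
  comm (madd E (Ymf K b a m a')) (t K.+1 K.+2 1) = madd E (Vf K b a).
Proof.
move=> hK hm; rewrite t_gcol; last by lia.
rewrite /Ymf /Yf comm_ee; first last.
- exact: gcol_sq.
- rewrite !(mmulDl, mmulDr, mmul_gcol); apply: meq => p q; rewrite /madd /gcol /mzero; crush2 p q; rewrite /=; ring.
- exact: supper_gcol.
- by repeat apply: supper_madd; apply: supper_gcol.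
rewrite !mneg_madd !mneg_gcol !(mmulDl, mmulDr, mmul_gcol).
apply: meq => p q; rewrite /Vf /madd /gcol /e; crush2 p q; rewrite /=; ring.
Qed.

Lemma Z_eq K b a : (1 <= K)%N ->
  comm (madd E (Vf K b a)) (t K.+3 (K.+1 + 3) 1) = madd E (Zf K b a).
Proof.
move=> hK; rewrite t_gcol; last by lia.
rewrite /Vf comm_ee; first last.
- exact: gcol_sq.
- rewrite !(mmulDl, mmulDr, mmul_gcol); apply: meq => p q; rewrite /madd /gcol /mzero; crush2 p q; rewrite /=; ring.
- exact: supper_gcol.
- by repeat apply: supper_madd; apply: supper_gcol.
rewrite !mneg_madd !mneg_gcol !(mmulDl, mmulDr, mmul_gcol).
apply: meq => p q; rewrite /Zf /Vf /madd /gcol /e; crush2 p q; rewrite /=; ring.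
Qed.


Lemma isUT_t n i j (a : F) : (0 < i < j)%N -> inrange n j -> isUT n (t i j a).
Proof. move=> h hj; rewrite t_gcol //; apply: isUT_eX; exact: sUT_gcol. Qed.

Lemma main_aux (n : ext_nat) (phi : mat F -> mat F) (k : nat) :
  PCmap n phi -> almost_identity n phi ->
  (2 <= k)%N -> ext_le (k + 3) n ->
  condZ phi k.-1 -> condY n phi k ->
  condZ phi k.
Proof.
move=> [hUT [_ [_ hcomm]]] hAI hk hle hZ hY.
case: k hk hle hZ hY => [|K] // hk hle hZ hY.
have hK : (1 <= K)%N by lia.
have inr : forall j, (1 <= j)%N -> (j <= K.+1 + 3)%N -> inrange n j.
  move=> j h1 h2; move: hle; rewrite /inrange /ext_le; case: n {hUT hcomm hAI hY hZ} => [m|] /= hm; rewrite h1 //=; lia.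
move=> g; cbv zeta.
rewrite bigprod //; last by lia.
have hu : phi (t (K+3) (K.+1+3) 1) = t (K+3) (K.+1+3) 1.
  by apply: hAI; [lia|lia|apply: inr; lia].
case: (eqVneq (g K.+1) 0) => hg.
  have hw := hZ g; cbv zeta in hw; rewrite /= bigprod // in hw; last by lia.
  rewrite -(@caseA K g hK hg) hcomm ?hw ?hu //.
    apply: isUT_eX; apply: sUT_gcol; apply: inr; lia.
  apply: isUT_t; [lia|apply: inr; lia].
pose b := - g K.+1; pose a := fun p => g p / g K.+1.
have [c [hc hphi]] := hY b a; cbv zeta in hphi.
have hUTY : isUT n (madd E (Yf K b a)).
  apply: isUT_eX; apply: sUT_madd; apply: sUT_gcol; apply: inr; lia.
rewrite Y_eq // in hphi.
have [m [a' [hm hcm]]] : exists m a', (K.+1 + 3 <= m)%N /\ c = t 1 m a'.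
  move: hc hle; rewrite /inCenter /ext_le; case: n {hUT hcomm hAI hY hZ inr hUTY hphi hu} => [m|] /=.
    by move=> [a' ->] hm; exists m, a'.
  move=> -> _; exists (K.+1 + 3)%N, 0; split => //.
  apply: meq => p q; rewrite /t /e /unit_mx mul0r addr0 //.
rewrite hcm Yc_eq // in hphi.
have hs : phi (t K.+1 K.+2 1) = t K.+1 K.+2 1.
  by apply: hAI; [lia|lia|apply: inr; lia].
have hv : phi (madd E (Vf K b a)) = madd E (Vf K b a).
  have e1 : comm (madd E (Yf K b a)) (t K.+1 K.+2 1) = madd E (Vf K b a).
    rewrite -(@V_eq K b a (K.+1 + 3) 0) //; congr comm; congr madd.
    apply: meq => p q; rewrite /Ymf /madd /gcol; crush; rewrite /=; ring.
  rewrite -{1}e1 hcomm // ?hphi ?hs ?(@V_eq K b a m a' hK hm) //.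
  apply: isUT_t; [lia|apply: inr; lia].
have hz : madd E (gcol (K.+1 + 3) (fun p => if (1 <= p < K.+2)%N then g p else 0)) = madd E (Zf K b a).
  apply: meq => p q; rewrite /Zf /madd /gcol /b /a; crush; rewrite /=; try ring.
  all: try (field; exact: hg).
have hu2 : phi (t K.+3 (K.+1+3) 1) = t K.+3 (K.+1+3) 1.
  by apply: hAI; [lia|lia|apply: inr; lia].
rewrite hz -(@Z_eq K b a hK) hcomm ?hv ?hu2 //.
  apply: isUT_eX; apply: sUT_madd; apply: sUT_gcol; apply: inr; lia.
apply: isUT_t; [lia|apply: inr; lia].
Qed.

End H.

Theorem mainTheorem3 (F : fieldType) (n : ext_nat) (phi : mat F -> mat F)
  (k : nat) :
  PCmap n phi -> almost_identity n phi ->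
  (2 <= k)%N -> ext_le (k + 3) n ->
  condZ phi k.-1 -> condY n phi k ->
  condZ phi k.
Proof. exact: main_aux. Qed.
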